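(* Let $p,q$ be positive integers with $p+q$ odd. For every $n\ge2$, $$|\mathcal{J}^{p,q}_n|=\frac{2\,|\mathcal{J}^{p,q}_{n-1}|^2}{|D_{2^{\lfloor (n-1)/2\rfloor+1}}|}.$$
   Context: Let $p,q$ be positive integers with $p+q$ odd. $\mathbb{Z}_{2^k}$ denotes the integers modulo $2^k$ ($\mathbb{Z}_1$ trivial); as $p+q$ is odd, division by $p+q$ and $(p+q)^2$ is well defined in $\mathbb{Z}_{2^k}$. For $m\ge1$, $D_{2m}$ is the dihedral group of order $2m$, realized as pairs $(f,x)$, $f\in\mathbb{Z}_2$, $x\in\mathbb{Z}_m$, with product $(f_1,x_1)(f_2,x_2)=(f_1+f_2,x_1+(-1)^{f_1}x_2)$. Define $\Phi:D_{2m}\to D_{2m}$, $\Phi((f,x))=(f,\delta(f=1)(p+q)(p-q)-x)$, where $\delta(f=1)$ is $1$ if $f=1$ and $0$ otherwise. $\mathrm{Aut}(T_1)$ is trivial; for $k\ge1$, $\mathrm{Aut}(T_{k+1})$ is the set of triples $g=(g_f,g_L,g_R)$, $g_f\in\mathbb{Z}_2$, $g_L,g_R\in\mathrm{Aut}(T_k)$, with product $(f,A,B)(g,C,D)=(f+g,AC,BD)$ if $f=0$ and $(f+g,AD,BC)$ if $f=1$; subscripts chain ($g_{LR}=(g_L)_R$, $g_{Lf}=(g_L)_f$). Recursively: $\mathcal{J}_1=\mathrm{Aut}(T_2)$, $\psi_1=0$, $\Delta_1(g)=(g_f,0)$; $\mathcal{J}_2=\{g\in\mathrm{Aut}(T_3):g_L=g_R\}$,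 $\psi_2(g)=\delta(g_{Lf}=1)\in\mathbb{Z}_2$, $\Delta_2(g)=(g_f,\psi_2(g))$; for $n\ge3$, $\mathcal{J}_n=\{g\in\mathrm{Aut}(T_{n+1}):g_L,g_R\in\mathcal{J}_{n-1},\ \Delta_{n-1}(g_L)=\Phi(\Delta_{n-1}(g_R))\}$, with $\psi_n:\mathcal{J}_n\to\mathbb{Z}_{2^{\lfloor n/2\rfloor}}$ given by $\psi_n(g)=(\psi_{n-1}(g_L)+\psi_{n-1}(g_R))/(p+q)$ for odd $n$ and $\psi_n(g)=\big(2(\psi_{n-2}(g_{LL})+\psi_{n-2}(g_{RL}))-\delta(g_{Lf}=1)(p+q)(p-q)\big)/(p+q)^2$ for even $n$ (with $2\psi_{n-2}(\cdot)$ read in $\mathbb{Z}_{2^{n/2}}$), and $\Delta_n:\mathcal{J}_n\to D_{2^{\lfloor n/2\rfloor+1}}$ given by $\Delta_n(g)=(g_f,\psi_{n-1}(g_L)-\psi_{n-1}(g_R))$ for odd $n$ and $\Delta_n(g)=(g_f,(p+q)\psi_n(g)-2\psi_{n-1}(g_R))$ for even $n$. *)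

(* Defs.v *)
From mathcomp Require Import all_boot all_algebra.
Unset Printing Implicit Defensive.
Import GRing.Theory Num.Theory.
Local Open Scope ring_scope.

(* AutT k = Aut(T_{k+1}):  Aut(T_1) = unit (trivial),
   Aut(T_{k+2}) = triples (g_f, g_L, g_R) with g_f : Z_2 (bool), g_L,g_R in Aut(T_{k+1}).
   For g : AutT k.+1 :  g.1.1 = g_f,  g.1.2 = g_L,  g.2 = g_R. *)
Fixpoint AutT (k : nat) : finType :=
  match k with
  | 0 => Finite.clone unit _
  | S k => Finite.clone (bool * AutT k * AutT k)%type _
  end.

(* Elements of Z_{2^k} are represented by their canonical representative in
   [0, 2^k) (an int). *)
Definition zmod (k : nat) (x : int) : int := (x %% (2 ^ k)%:Z)%Z.

(* Division x / a in Z_{2^k} (a odd): the unique y in [0,2^k) with a*y = x mod 2^k. *)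
Definition zdiv (k : nat) (x a : int) : int :=
  (nth 0%N [seq y <- iota 0 (2 ^ k) | ((a * y%:Z - x) %% (2 ^ k)%:Z)%Z == 0] 0%N)%:Z.

(* Elements (f, x) of D_{2^{k+1}} = Z_2 x Z_{2^k}, represented as (f, canonical rep of x). *)
Definition dihedral_order (k : nat) : nat := #|{: bool * 'I_(2 ^ k)}|.

Section Construction.
Variables p q : nat.

Definition PQ : int := (p + q)%:Z.
Definition cPQ : int := ((p + q)%:Z * (p%:Z - q%:Z)).

Definition Phi (k : nat) (d : bool * int) : bool * int :=
  (d.1, zmod k ((if d.1 then cPQ else 0) - d.2)).

(* psi n : J_n -> Z_{2^{floor(n/2)}}, defined on all of Aut(T_{n+1}) = AutT n.
   psi 1 = 0;  psi 2 g = delta(g_{Lf} = 1);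
   odd n >= 3:  psi n g = (psi_{n-1}(g_L) + psi_{n-1}(g_R)) / (p+q);
   even n >= 4: psi n g = (2(psi_{n-2}(g_LL) + psi_{n-2}(g_RL)) - delta(g_Lf=1)(p+q)(p-q)) / (p+q)^2.
   (prev = psi (n-1), pprev = psi (n-2) below.) *)
Fixpoint psi (n : nat) : AutT n -> int :=
  match n return AutT n -> int with
  | 0 => fun _ => 0
  | S m =>
    (match m as m' return (AutT m' -> int) -> AutT m'.+1 -> int with
     | 0 => fun _ _ => 0
     | S k => fun prev =>
       (match k as k' return
          (AutT k'.+1 -> int) -> (AutT k' -> int) -> AutT k'.+2 -> int with
        | 0 => fun _ _ g => if g.1.2.1.1 then 1 else 0
        | S _ => fun prev pprev g =>
            if odd n then
              zdiv (n./2) (prev (g.1.2) + prev (g.2)) PQ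
            else
              zdiv (n./2)
                (2 * (pprev (g.1.2.1.2) + pprev (g.2.1.2))
                   - (if g.1.2.1.1 then cPQ else 0))
                (PQ * PQ)
        end) prev (psi k)
     end) (psi m)
  end.

(* Delta n : J_n -> D_{2^{floor(n/2)+1}}:
   Delta 1 g = (g_f, 0);  Delta 2 g = (g_f, psi_2(g));
   odd n >= 3:  (g_f, psi_{n-1}(g_L) - psi_{n-1}(g_R));
   even n >= 4: (g_f, (p+q) psi_n(g) - 2 psi_{n-1}(g_R)). *)
Definition Delta (n : nat) : AutT n -> bool * int :=
  match n return AutT n -> bool * int with
  | 0 => fun _ => (false, 0)
  | 1 => fun g => (g.1.1, 0)
  | 2 => fun g => (g.1.1, psi 2 g)
  | S (S (S j)) => fun g =>
      if odd j.+3 then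
        (g.1.1, zmod (j.+3)./2 (psi j.+2 (g.1.2) - psi j.+2 (g.2)))
      else
        (g.1.1, zmod (j.+3)./2 (PQ * psi j.+3 g - 2 * psi j.+2 (g.2)))
  end.

(* Membership in J_n (a subset of Aut(T_{n+1}) = AutT n), for n >= 1:
   J_1 = Aut(T_2);  J_2 = {g | g_L = g_R};
   n >= 3: g_L, g_R in J_{n-1} and Delta_{n-1}(g_L) = Phi(Delta_{n-1}(g_R))
   (Phi acting on D_{2^{floor((n-1)/2)+1}}).  (prev = inJ (n-1) below.) *)
Fixpoint inJ (n : nat) : AutT n -> bool :=
  match n return AutT n -> bool with
  | 0 => fun _ => true (* J_0 is not used *)
  | S m =>
    (match m as m' return (AutT m' -> bool) -> AutT m'.+1 -> bool with
     | 0 => fun _ _ => true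
     | S k =>
       (match k as k' return (AutT k'.+1 -> bool) -> AutT k'.+2 -> bool with
        | 0 => fun _ g => g.1.2 == g.2
        | S j => fun prev g =>
            [&& prev (g.1.2), prev (g.2) &
                Delta j.+2 (g.1.2) == Phi (j.+2)./2 (Delta j.+2 (g.2))]
        end)
     end) (inJ m)
  end.

Definition J (n : nat) : {set AutT n} := [set g | inJ n g].

End Construction.

(* Main.v *)
Require Import Defs.
From mathcomp Require Import all_boot all_algebra.
From mathcomp Require Import zify ring lra.
Import GRing.Theory Num.Theory.
Local Open Scope ring_scope.


Lemma pow2_gt0 (k : nat) : 0 < (2 ^ k)%:Z.
Proof. by rewrite ltz_nat expn_gt0. Qed.

Lemma pow2S (k : nat) : (2 ^ k.+1)%:Z = 2 * (2 ^ k)%:Z.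
Proof. by rewrite expnS PoszM. Qed.

Lemma zmod_range k x : 0 <= zmod k x < (2 ^ k)%:Z.
Proof. have := pow2_gt0 k; rewrite /zmod; lia. Qed.

Lemma zmod_eq k x y : (zmod k x == zmod k y) = ((2 ^ k)%:Z %| x - y)%Z.
Proof. by rewrite /zmod eqz_mod_dvd. Qed.

Lemma zmod_small k x : 0 <= x < (2 ^ k)%:Z -> zmod k x = x.
Proof. exact: modz_small. Qed.

Lemma dvdz_modr (M a b : int) : (M %| a - (b %% M)%Z)%Z = (M %| a - b)%Z.
Proof. by rewrite -!eqz_mod_dvd modz_mod. Qed.

Lemma coprime_pow2 k (a : int) : ~~ (2 %| a)%Z -> coprimez a (2 ^ k)%:Z.
Proof.
move=> ha; rewrite coprimezE /= coprime_sym; apply: coprimeXl.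
rewrite coprime2n; move: ha; rewrite dvdzE /= dvdn2; by rewrite negbK.
Qed.

Lemma uniq_single (s : seq nat) y : uniq s -> (forall x, x \in s -> x = y) -> y \in s -> s = [:: y].
Proof.
case: s => [//|a s] /= /andP[ha us] hall hy.
have ay : a = y by apply: hall; rewrite inE eqxx.
subst a; case: s ha us hall hy => [//|b s] /= hb _ hall _.
have : b = y by apply: hall; rewrite !inE eqxx orbT.
move=> eb; subst b; by rewrite inE eqxx in hb.
Qed.

Lemma zdiv_spec k (x a : int) : ~~ (2 %| a)%Z ->
  0 <= zdiv k x a < (2 ^ k)%:Z /\ ((2 ^ k)%:Z %| a * zdiv k x a - x)%Z.
Proof.
move=> ha; set M := (2 ^ k)%:Z.
have M0 : 0 < M := pow2_gt0 k.
have cop := coprime_pow2 k a ha.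
have [u [v huv]] := Bezoutz a M.
move: cop; rewrite /coprimez => /eqP cop; rewrite cop in huv.
pose y0 := zmod k (u * x).
have y0r : 0 <= y0 < M := zmod_range k (u * x).
have hy0 : (M %| a * y0 - x)%Z.
  rewrite /y0 /zmod.
  have -> : a * ((u * x) %% M)%Z - x = a * (((u * x) %% M)%Z - u * x) + (a * u * x - x) by ring.
  rewrite rpredD //.
    apply: dvdz_mull. by rewrite -eqz_mod_dvd modz_mod.
  have -> : a * u * x - x = - (x * v) * M.
    have -> : a * u = 1 - v * M by rewrite -huv; ring.
    ring.
  by apply: dvdz_mull; apply: dvdzz.
have uniqs : forall y, 0 <= y < M -> (M %| a * y - x)%Z -> y = y0.
  move=> y yr hy.
  have : (M %| a * (y - y0))%Z.
    have -> : a * (y - y0) = (a * y - x) - (a * y0 - x) by ring.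
    by rewrite rpredB.
  rewrite Gauss_dvdzr; last by rewrite coprimez_sym coprime_pow2.
  rewrite -eqz_mod_dvd => /eqP.
  by rewrite !modz_small.
have y0n : (absz y0)%:Z = y0 by rewrite abszE ger0_norm //; case/andP: y0r.
rewrite /zdiv.
set P := (fun y : nat => _).
have -> : [seq y <- iota 0 (2 ^ k) | P y] = [:: absz y0].
  apply: uniq_single.
  - by rewrite filter_uniq // iota_uniq.
  - move=> y; rewrite mem_filter mem_iota /= => /andP[Py yr].
    change y with (absz y%:Z); congr absz; apply: uniqs.
      rewrite /M; lia.
    by apply/dvdz_mod0P/eqP.
  - rewrite mem_filter mem_iota /= add0n; apply/andP; split.
      rewrite /P; apply/eqP/dvdz_mod0P; by rewrite y0n.
    move: y0r; rewrite -y0n /M; lia.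
rewrite /= y0n; split=> //; by case/andP: y0r.
Qed.

Lemma cong_uniq k (a x y1 y2 : int) : ~~ (2 %| a)%Z ->
  0 <= y1 < (2 ^ k)%:Z -> 0 <= y2 < (2 ^ k)%:Z ->
  ((2 ^ k)%:Z %| a * y1 - x)%Z -> ((2 ^ k)%:Z %| a * y2 - x)%Z -> y1 = y2.
Proof.
move=> ha r1 r2 h1 h2.
have : ((2 ^ k)%:Z %| a * (y1 - y2))%Z.
  have -> : a * (y1 - y2) = (a * y1 - x) - (a * y2 - x) by ring.
  by rewrite rpredB.
rewrite Gauss_dvdzr; last by rewrite coprimez_sym coprime_pow2.
rewrite -eqz_mod_dvd => /eqP.
by rewrite !modz_small.
Qed.

Lemma zdiv_range k x a : ~~ (2 %| a)%Z -> 0 <= zdiv k x a < (2 ^ k)%:Z.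
Proof. by move=> ha; case: (zdiv_spec k x a ha). Qed.

Lemma zdiv_eq k (x a y : int) : ~~ (2 %| a)%Z -> 0 <= y < (2 ^ k)%:Z ->
  (zdiv k x a == y) = ((2 ^ k)%:Z %| a * y - x)%Z.
Proof.
move=> ha yr; have [r h] := zdiv_spec k x a ha.
apply/eqP/idP => [<- //|hy].
exact: (cong_uniq _ _ _ _ _ ha r yr h hy).
Qed.

Lemma dvdz2 (M w : int) : (2 * M %| 2 * w)%Z = (M %| w)%Z.
Proof. by rewrite !dvdzE !abszM dvdn_pmul2l. Qed.

Lemma absz_zmod k T : (absz (zmod k T))%:Z = zmod k T.
Proof. rewrite abszE ger0_norm //; by case/andP: (zmod_range k T). Qed.

Lemma sum_pick k (T : int) (F : nat -> nat) :
  (forall i, (i < 2 ^ k)%N -> ~~ ((2 ^ k)%:Z %| i%:Z - T)%Z -> F i = 0%N) ->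
  (\sum_(i < 2 ^ k) F i = F (absz (zmod k T)))%N.
Proof.
move=> F0.
have hi0 : (absz (zmod k T) < 2 ^ k)%N.
  by rewrite -ltz_nat absz_zmod; case/andP: (zmod_range k T).
rewrite (bigD1 (Ordinal hi0)) //= big1 ?addn0 // => i /eqP ne.
apply: F0 => //; apply/negP => hd; apply: ne; apply: val_inj => /=.
change (nat_of_ord i) with (absz (nat_of_ord i)%:Z); congr absz.
have : (zmod k i == zmod k T) by rewrite zmod_eq.
rewrite (zmod_small k i) => [/eqP //|].
rewrite ltz_nat ltn_ord; lia.
Qed.

Lemma sum_pick2 k (W : int) (F : nat -> nat) :
  (forall i, (i < 2 ^ k)%N -> ~~ ((2 ^ k.+1)%:Z %| W - 2 * i%:Z)%Z -> F i = 0%N) ->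
  (\sum_(i < 2 ^ k) F i = if (2 %| W)%Z then F (absz (zmod k (W %/ 2)%Z)) else 0)%N.
Proof.
move=> F0; case: ifP => hW.
  apply: sum_pick => i hi hn; apply: F0 => //.
  rewrite pow2S -{1}(divzK hW) mulrC.
  have -> : 2 * (W %/ 2)%Z - 2 * i%:Z = 2 * ((W %/ 2)%Z - i%:Z) by ring.
  rewrite dvdz2; apply: contra hn => h.
  have -> : i%:Z - (W %/ 2)%Z = - ((W %/ 2)%Z - i%:Z) by ring.
  by rewrite rpredN.
rewrite big1 // => i _; apply: F0 => //.
apply/negP => h; move/negP: hW; apply.
have h2 : (2 %| (2 ^ k.+1)%:Z)%Z by rewrite pow2S; apply: dvdz_mulr; exact: dvdzz.
have e : W = (W - 2 * i%:Z) + 2 * i%:Z by ring.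
rewrite e rpredD //; first exact: dvdz_trans h2 h.
apply: dvdz_mulr; exact: dvdzz.
Qed.

Definition bsum (X Y : nat) (F : bool * int * int -> nat) : nat :=
  (\sum_(e : bool) \sum_(x < X) \sum_(y < Y) F (e, x%:Z, y%:Z))%N.

Lemma sum_only (I : finType) (i0 : I) (G : I -> nat) :
  (forall i, i != i0 -> G i = 0%N) -> (\sum_i G i = G i0)%N.
Proof. move=> h; rewrite (bigD1 i0) // big1 => [|i]; [by rewrite /= addn0 | exact: h]. Qed.

Lemma bsum_pick X Y (v : bool * int * int) (F : bool * int * int -> nat) :
  0 <= v.1.2 < X%:Z -> 0 <= v.2 < Y%:Z ->
  bsum X Y (fun w => ((v == w) * F w)%N) = F v.
Proof.
case: v => [[e0 x0] y0] /= hx hy.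
have hx' : (absz x0 < X)%N by move: hx; rewrite -ltz_nat abszE; lia.
have hy' : (absz y0 < Y)%N by move: hy; rewrite -ltz_nat abszE; lia.
have ex : (absz x0)%:Z = x0 by rewrite abszE; lia.
have ey : (absz y0)%:Z = y0 by rewrite abszE; lia.
rewrite /bsum (sum_only _ e0); last first.
  move=> e ne; apply: big1 => x _; apply: big1 => y _.
  rewrite !xpair_eqE.
  have -> : (e0 == e) = false by apply/negP => /eqP ee; rewrite ee eqxx in ne.
  by [].
etransitivity; first apply: (sum_only _ (Ordinal hx')).
  move=> x ne; apply: big1 => y _.
  rewrite !xpair_eqE eqxx /=.
  case: eqP => [hxe|]; last by [].
  exfalso; move/eqP: ne; apply; apply: val_inj => /=.
  by rewrite hxe.
rewrite /= ex.
etransitivity; first apply: (sum_only _ (Ordinal hy')).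
  move=> y ne.
  rewrite !xpair_eqE /=.
  case: (y0 =P y) => [hye|]; last by rewrite andbF.
  exfalso; move/eqP: ne; apply; apply: val_inj => /=.
  by rewrite hye.
by rewrite /= ey eqxx mul1n.
Qed.

Lemma push (T : finType) (P : pred T) (h : T -> bool * int * int) (X Y C : nat)
  (F : bool * int * int -> nat) :
  (forall t, 0 <= (h t).1.2 < X%:Z /\ 0 <= (h t).2 < Y%:Z) ->
  (forall e (x : 'I_X) (y : 'I_Y), (\sum_t (P t && (h t == (e, x%:Z, y%:Z))))%N = C) ->
  (\sum_t (P t * F (h t)) = C * bsum X Y F)%N.
Proof.
move=> hr hc.
transitivity (\sum_t bsum X Y (fun w => ((P t && (h t == w)) * F w)))%N.
  apply: eq_bigr => t _.
  case: (P t) => /=; last first.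
    rewrite /bsum; symmetry; apply: big1 => e _; apply: big1 => x _; by apply: big1.
  case: (hr t) => h1 h2; by rewrite mul1n bsum_pick.
rewrite /bsum exchange_big /= bigop.big_distrr /=; apply: eq_bigr => e _.
rewrite exchange_big /= bigop.big_distrr /=; apply: eq_bigr => x _.
rewrite exchange_big /= bigop.big_distrr /=; apply: eq_bigr => y _.
by rewrite -bigop.big_distrl /= hc.
Qed.

Lemma odd_mul (a b : int) : ~~ (2 %| a)%Z -> ~~ (2 %| b)%Z -> ~~ (2 %| a * b)%Z.
Proof.
rewrite !dvdzE abszM => ha hb.
by rewrite Euclid_dvdM // negb_or ha hb.
Qed.

Lemma PQ_odd p q : odd (p + q) -> ~~ (2 %| PQ p q)%Z.
Proof. move=> h; rewrite /PQ dvdzE /= dvdn2 h. done. Qed.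

Lemma PQ2_odd p q : odd (p + q) -> ~~ (2 %| PQ p q * PQ p q)%Z.
Proof. by move=> h; apply: odd_mul; apply: PQ_odd. Qed.

Lemma cPQ_odd p q : odd (p + q) -> ~~ (2 %| cPQ p q)%Z.
Proof.
move=> h; rewrite /cPQ; apply: odd_mul; first exact: (PQ_odd p q h).
have := PQ_odd p q h; rewrite /PQ; lia.
Qed.

Definition cc p q (e : bool) : int := if e then cPQ p q else 0.

Definition info p q k (g : AutT k.+2) : bool * int * int :=
  (g.1.1, if odd k then psi p q k.+1 g.1.2 else psi p q k.+2 g, psi p q k.+1 g.2).

Definition DeltaI p q k (v : bool * int * int) : bool * int :=
  (v.1.1, zmod (k.+2)./2 (if odd k then v.1.2 - v.2 else PQ p q * v.1.2 - 2 * v.2)).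

Definition infoN p q k (f : bool) (vL vR : bool * int * int) : bool * int * int :=
  (f, if odd k then zdiv (k.+3)./2 (2 * (vL.1.2 + vR.1.2) - cc p q vL.1.1) (PQ p q * PQ p q)
      else vL.1.2,
      if odd k then zdiv (k.+2)./2 (vR.1.2 + vR.2) (PQ p q) else vR.1.2).

Lemma psi_S (p q k : nat) (g : AutT k.+3) :
  psi p q k.+3 g = if odd k.+3 then zdiv (k.+3)./2 (psi p q k.+2 g.1.2 + psi p q k.+2 g.2) (PQ p q)
   else zdiv (k.+3)./2 (2 * (psi p q k.+1 g.1.2.1.2 + psi p q k.+1 g.2.1.2) - (if g.1.2.1.1 then cPQ p q else 0)) (PQ p q * PQ p q).
Proof. by []. Qed.

Lemma Delta_S (p q k : nat) (g : AutT k.+3) :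
  Delta p q k.+3 g = if odd k.+3 then
        (g.1.1, zmod (k.+3)./2 (psi p q k.+2 (g.1.2) - psi p q k.+2 (g.2)))
      else
        (g.1.1, zmod (k.+3)./2 (PQ p q * psi p q k.+3 g - 2 * psi p q k.+2 (g.2))).
Proof. by []. Qed.

Lemma psi_range p q n (g : AutT n) : odd (p + q) -> 0 <= psi p q n g < (2 ^ n./2)%:Z.
Proof.
move=> h; case: n g => [|[|[|k]]] g.
- by change (psi p q 0 g) with (0:int).
- by change (psi p q 1 g) with (0:int).
- change (psi p q 2 g) with (if g.1.2.1.1 then 1 else 0 : int).
  by case: ifP.
have [o|o] := boolP (odd k.+3).
  rewrite psi_S (ifT _ _ o).
  exact: zdiv_range (PQ_odd p q h).
rewrite psi_S (ifN _ _ o).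
exact: zdiv_range (PQ2_odd p q h).
Qed.

Lemma odd3 k : odd k.+3 = odd k.+1.
Proof. by rewrite !oddS negbK. Qed.

Lemma Delta_info0 p q (h : AutT 2) : odd (p + q) ->
  Delta p q 2 h = DeltaI p q 0 (info p q 0 h).
Proof.
move=> hpq.
change (Delta p q 2 h) with (h.1.1, psi p q 2 h).
change (DeltaI p q 0 (info p q 0 h)) with
     (h.1.1, zmod 1 (PQ p q * psi p q 2 h - 2 * psi p q 1 h.2)).
change (psi p q 1 h.2) with (0:int).
change (psi p q 2 h) with (if h.1.2.1.1 then 1 else 0 : int).
congr pair.
have := PQ_odd p q hpq; rewrite /zmod; case: ifP => _; lia.
Qed.

Lemma DI_abs p q (K : nat) (o1 o3 : bool) (E : o3 = o1) (f : bool) (a b c : int) :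
  (if o3 then (f, zmod K (a - b)) else (f, zmod K (PQ p q * c - 2 * b))) =
  (f, zmod K (if o1 then (if o1 then a else c) - b else PQ p q * (if o1 then a else c) - 2 * b)).
Proof. by subst; case: o1. Qed.

Lemma Delta_infoS p q k (h : AutT k.+3) :
  Delta p q k.+3 h = DeltaI p q k.+1 (info p q k.+1 h).
Proof.
exact: (DI_abs p q (k.+3)./2 (odd k.+1) (odd k.+3) (odd3 k) h.1.1
          (psi p q k.+2 h.1.2) (psi p q k.+2 h.2) (psi p q k.+3 h)).
Qed.

Lemma Delta_info p q k (h : AutT k.+2) : odd (p + q) ->
  Delta p q k.+2 h = DeltaI p q k (info p q k h).
Proof.
case: k h => [|k] h hpq; first exact: Delta_info0.
exact: Delta_infoS.
Qed.

Lemma if_abs (A : Type) (b : bool) (x y z : A) : b -> z = (if b then x else y) -> z = x.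
Proof. by move=> -> . Qed.

Lemma psi_odd_unfold p q k (R : AutT k.+2) : odd k ->
  psi p q k.+2 R = zdiv (k.+2)./2 (psi p q k.+1 R.1.2 + psi p q k.+1 R.2) (PQ p q).
Proof.
case: k R => [//|k] R ok.
have o3 : odd k.+3 by rewrite odd3.
exact: (if_abs _ (odd k.+3) _ _ _ o3 (psi_S p q k R)).
Qed.

Lemma infoS_abs p q (K2 K3 : nat) (o1 o3 ok : bool) (E1 : o1 = ~~ ok) (E3 : o3 = ~~ ok)
   (f eL : bool) (aL aR cL cR bR P3 : int)
   (HP3 : P3 = if o3 then zdiv K3 (cL + cR) (PQ p q)
              else zdiv K3 (2 * (aL + aR) - (if eL then cPQ p q else 0)) (PQ p q * PQ p q))
   (HR : ok -> cR = zdiv K2 (aR + bR) (PQ p q)) :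
  (f, (if o1 then cL else P3), cR) =
  (f, if ok then zdiv K3 (2 * ((if ok then aL else cL) + (if ok then aR else cR)) - cc p q eL) (PQ p q * PQ p q)
      else (if ok then aL else cL),
      if ok then zdiv K2 ((if ok then aR else cR) + bR) (PQ p q) else (if ok then aR else cR)).
Proof.
subst; case: ok HR => [HR|_] /=.
  by rewrite -HR.
by [].
Qed.

Lemma info_S p q k f (L R : AutT k.+2) :
  info p q k.+1 (f, L, R) = infoN p q k f (info p q k L) (info p q k R).
Proof.
have E1 : odd k.+1 = ~~ odd k by rewrite oddS.
have E3 : odd k.+3 = ~~ odd k by rewrite odd3 oddS.
exact: (infoS_abs p q (k.+2)./2 (k.+3)./2 (odd k.+1) (odd k.+3) (odd k) E1 E3 f L.1.1
   (psi p q k.+1 L.1.2) (psi p q k.+1 R.1.2) (psi p q k.+2 L) (psi p q k.+2 R) (psi p q k.+1 R.2)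
   (psi p q k.+3 (f, L, R)) (psi_S p q k (f, L, R)) (@psi_odd_unfold p q k R)).
Qed.


Lemma sumAnd (I : finType) (A : bool) (c : I -> bool) :
  (\sum_(i : I) ((A && c i) : nat) = A * \sum_(i : I) (c i : nat))%N.
Proof.
case: A; first by rewrite mul1n.
by rewrite mul0n big1.
Qed.

Lemma sumConst (N : nat) (A : nat) : (\sum_(i < N) A = N * A)%N.
Proof. by rewrite sum_nat_const card_ord. Qed.

Lemma cntEq (I : finType) (i0 : I) : (\sum_(i : I) ((i0 == i) : nat) = 1)%N.
Proof.
rewrite (sum_only _ i0) ?eqxx // => i ne.
by rewrite eq_sym (negbTE ne).
Qed.

Lemma cntEqZ N (b : int) : 0 <= b < N%:Z -> (\sum_(x < N) ((x%:Z == b) : nat) = 1)%N.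
Proof.
move=> hb.
have hb' : (absz b < N)%N by move: hb; rewrite -ltz_nat abszE; lia.
have eb : (absz b)%:Z = b by rewrite abszE; lia.
rewrite (sum_only _ (Ordinal hb')) /= ?eb ?eqxx // => x ne.
case: eqP => // hx; exfalso; move/eqP: ne; apply; apply: val_inj => /=.
by rewrite -hx.
Qed.

Lemma cnt1 k (T : int) : (\sum_(y < 2 ^ k) (((2 ^ k)%:Z %| (y%:Z - T)%R)%Z : nat) = 1)%N.
Proof.
rewrite (sum_pick k T (fun y : nat => (((2 ^ k)%:Z %| (y%:Z - T)%R)%Z : nat))) => [|i _ hn]; last by rewrite (negbTE hn).
rewrite absz_zmod -(zmod_eq k) /zmod modz_mod eqxx //.
Qed.

Lemma cnt2 k (W : int) :
  (\sum_(y < 2 ^ k) (((2 ^ k.+1)%:Z %| (W - 2 * y%:Z)%R)%Z : nat) = ((2 %| W)%Z : nat))%N.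
Proof.
rewrite (sum_pick2 k W (fun y : nat => (((2 ^ k.+1)%:Z %| (W - 2 * y%:Z)%R)%Z : nat))) => [|i _ hn]; last by rewrite (negbTE hn).
case: ifP => // hW.
rewrite absz_zmod pow2S.
have -> : W - 2 * zmod k (W %/ 2)%Z = 2 * ((W %/ 2)%Z - zmod k (W %/ 2)%Z).
  rewrite -{1}(divzK hW); ring.
rewrite dvdz2 -zmod_eq /zmod modz_mod eqxx //.
Qed.

Lemma cntPar (c Z : int) : ~~ (2 %| c)%Z ->
  (\sum_(e : bool) ((2 %| (Z + (if e then c else 0))%R)%Z : nat) = 1)%N.
Proof.
move=> hc; rewrite big_bool /= addr0.
have : (2 %| Z + c)%Z = ~~ (2 %| Z)%Z by apply/idP/idP; lia.
by move=> ->; case: (2 %| Z)%Z.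
Qed.



Lemma combO (P c s t : int) (j : nat) (e : bool) : ~~ (2 %| c)%Z ->
  let cc' := fun b : bool => if b then c else 0 in
  let D := fun (xL yL : int) => ((2 ^ j)%:Z %| (yL - (P * P * s - xL - P * t))%R)%Z in
  let S := fun (eL : bool) (xL xR : int) => ((2 ^ j.+1)%:Z %| ((P * P * s + cc' eL - 2 * xL) - 2 * xR)%R)%Z in
  let T := fun (xR yR : int) => ((2 ^ j)%:Z %| (yR - (P * t - xR))%R)%Z in
  (\sum_(f : bool) \sum_(eL : bool) \sum_(xL < 2 ^ j) \sum_(yL < 2 ^ j)
     \sum_(eR : bool) \sum_(xR < 2 ^ j) \sum_(yR < 2 ^ j)
     ([&& f == e, eL == eR, D xL yL, S eL xL xR & T xR yR] : nat) = 2 ^ j)%N.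
Proof.
move=> hc cc' D S T.
transitivity (\sum_(f : bool) \sum_(eL : bool) \sum_(xL < 2 ^ j) \sum_(yL < 2 ^ j)
     \sum_(eR : bool) \sum_(xR < 2 ^ j) ([&& f == e, eL == eR, D xL yL & S eL xL xR] : nat))%N.
  do 6 (apply: eq_bigr => ? _).
  under eq_bigr => yR _ do rewrite !andbA.
  by rewrite sumAnd cnt1 muln1 !andbA.
transitivity (\sum_(f : bool) \sum_(eL : bool) \sum_(xL < 2 ^ j) \sum_(yL < 2 ^ j)
     \sum_(eR : bool) (([&& f == e, eL == eR & D xL yL] : nat) *
        ((2 %| (P * P * s + cc' eL - 2 * xL%:Z)%R)%Z : nat)))%N.
  do 5 (apply: eq_bigr => ? _).
  under eq_bigr => xR _ do rewrite !andbA.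
  by rewrite sumAnd cnt2 !andbA.
transitivity (\sum_(f : bool) \sum_(eL : bool) \sum_(xL < 2 ^ j) \sum_(yL < 2 ^ j)
     (((f == e) && D xL yL : nat) * ((2 %| (P * P * s + cc' eL - 2 * xL%:Z)%R)%Z : nat)))%N.
  do 4 (apply: eq_bigr => ? _).
  rewrite -bigop.big_distrl /=; congr (_ * _)%N.
  have hh : forall a b d : bool, [&& a, b & d] = (a && d) && b by do 3 case.
  under eq_bigr => eR _ do rewrite hh.
  by rewrite sumAnd cntEq muln1.
transitivity (\sum_(f : bool) \sum_(eL : bool) \sum_(xL < 2 ^ j)
     (((f == e) : nat) * ((2 %| (P * P * s + cc' eL - 2 * xL%:Z)%R)%Z : nat)))%N.
  do 3 (apply: eq_bigr => ? _).
  rewrite -bigop.big_distrl /=; congr (_ * _)%N.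
  by rewrite sumAnd cnt1 muln1.
transitivity (\sum_(f : bool) \sum_(eL : bool)
     (((f == e) : nat) * (2 ^ j * ((2 %| (P * P * s + cc' eL)%R)%Z : nat))))%N.
  apply: eq_bigr => f _; apply: eq_bigr => eL _.
  rewrite -bigop.big_distrr /=; congr (_ * _)%N.
  have hp : forall xL : int, (2 %| (P * P * s + cc' eL - 2 * xL)%R)%Z = (2 %| (P * P * s + cc' eL)%R)%Z.
    by move=> xL; apply/idP/idP; lia.
  under eq_bigr => xL _ do rewrite hp.
  by rewrite sumConst.
transitivity (\sum_(f : bool) ((f == e) : nat) * 2 ^ j)%N.
  apply: eq_bigr => f _.
  rewrite -bigop.big_distrr /=; congr (_ * _)%N.
  rewrite -bigop.big_distrr /= cntPar // muln1 //.
rewrite -bigop.big_distrl /=.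
under eq_bigr => f _ do rewrite eq_sym.
by rewrite cntEq mul1n.
Qed.

Lemma combE (P c a b : int) (i : nat) (e : bool) : ~~ (2 %| c)%Z ->
  0 <= a < (2 ^ i.+1)%:Z -> 0 <= b < (2 ^ i.+1)%:Z ->
  let cc' := fun b : bool => if b then c else 0 in
  let W := fun (eL : bool) (xL yL xR : int) => P * xL - 2 * yL - cc' eL + P * xR in
  (\sum_(f : bool) \sum_(eL : bool) \sum_(xL < 2 ^ i.+1) \sum_(yL < 2 ^ i)
     \sum_(eR : bool) \sum_(xR < 2 ^ i.+1) \sum_(yR < 2 ^ i)
     ([&& f == e, eL == eR, xL%:Z == a, xR%:Z == b &
         ((2 ^ i.+1)%:Z %| (W eL xL yL xR - 2 * yR%:Z)%R)%Z] : nat) = 2 ^ i)%N.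
Proof.
move=> hc ha hb cc' W.
transitivity (\sum_(f : bool) \sum_(eL : bool) \sum_(xL < 2 ^ i.+1) \sum_(yL < 2 ^ i)
     \sum_(eR : bool) \sum_(xR < 2 ^ i.+1)
     ([&& f == e, eL == eR, xL%:Z == a & xR%:Z == b] * ((2 %| W eL xL yL xR)%Z : nat)))%N.
  do 6 (apply: eq_bigr => ? _).
  under eq_bigr => yR _ do rewrite !andbA.
  by rewrite sumAnd cnt2 !andbA.
transitivity (\sum_(f : bool) \sum_(eL : bool) \sum_(xL < 2 ^ i.+1) \sum_(yL < 2 ^ i)
     \sum_(eR : bool) ([&& f == e, eL == eR, xL%:Z == a & (2 %| W eL xL yL b)%Z] : nat))%N.
  apply: eq_bigr => f _; apply: eq_bigr => eL _; apply: eq_bigr => xL _; apply: eq_bigr => yL _.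
  apply: eq_bigr => eR _.
  have hh : forall xR : 'I_(2 ^ i.+1),
     ([&& f == e, eL == eR, xL%:Z == a & xR%:Z == b] * ((2 %| W eL xL yL xR)%Z : nat))%N =
     (([&& f == e, eL == eR, xL%:Z == a & (2 %| W eL xL yL b)%Z]) && (xR%:Z == b) : nat).
    move=> xR; rewrite mulnb.
    case: (xR%:Z =P b) => [->|_]; first by rewrite !andbT; do 3 case: (_ == _).
    by rewrite !andbF.
  under eq_bigr => xR _ do rewrite hh.
  by rewrite sumAnd cntEqZ // muln1.
transitivity (\sum_(f : bool) \sum_(eL : bool) \sum_(xL < 2 ^ i.+1) \sum_(yL < 2 ^ i)
     ([&& f == e, xL%:Z == a & (2 %| W eL xL yL b)%Z] : nat))%N.
  do 4 (apply: eq_bigr => ? _).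
  have hh : forall a1 b1 c1 d1 : bool, [&& a1, b1, c1 & d1] = ([&& a1, c1 & d1] && b1) by do 4 case.
  under eq_bigr => eR _ do rewrite hh.
  by rewrite sumAnd cntEq muln1.
transitivity (\sum_(f : bool) \sum_(eL : bool) \sum_(xL < 2 ^ i.+1)
     (2 ^ i * ([&& f == e, xL%:Z == a & (2 %| (P * xL%:Z - cc' eL + P * b)%R)%Z] : nat)))%N.
  apply: eq_bigr => f _; apply: eq_bigr => eL _; apply: eq_bigr => xL _.
  have hp : forall yL : int, (2 %| W eL xL yL b)%Z = (2 %| (P * xL%:Z - cc' eL + P * b)%R)%Z.
    by move=> yL; rewrite /W; apply/idP/idP; lia.
  under eq_bigr => yL _ do rewrite hp.
  by rewrite sumConst.
transitivity (\sum_(f : bool) \sum_(eL : bool)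
     (2 ^ i * ((f == e) && (2 %| (P * a - cc' eL + P * b)%R)%Z : nat)))%N.
  apply: eq_bigr => f _; apply: eq_bigr => eL _.
  rewrite -bigop.big_distrr /=; congr (_ * _)%N.
  have hh : forall xL : 'I_(2 ^ i.+1),
     ([&& f == e, xL%:Z == a & (2 %| (P * xL%:Z - cc' eL + P * b)%R)%Z] : nat) =
     (((f == e) && (2 %| (P * a - cc' eL + P * b)%R)%Z) && (xL%:Z == a) : nat).
    move=> xL; case: (xL%:Z =P a) => [->|_]; first by rewrite andbT andbC.
    by rewrite !andbF.
  under eq_bigr => xL _ do rewrite hh.
  by rewrite sumAnd cntEqZ // muln1.
transitivity (\sum_(f : bool) (2 ^ i * ((f == e) : nat)))%N.
  apply: eq_bigr => f _.
  rewrite -bigop.big_distrr /=; congr (_ * _)%N.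
  rewrite sumAnd.
  have hp : forall eL : bool, (2 %| (P * a - cc' eL + P * b)%R)%Z = (2 %| ((P * a + P * b) + (if eL then c else 0))%R)%Z.
    by move=> eL; rewrite /cc'; case: eL; apply/idP/idP; lia.
  under eq_bigr => eL _ do rewrite hp.
  by rewrite cntPar // muln1.
rewrite -bigop.big_distrr /=.
under eq_bigr => f _ do rewrite eq_sym.
by rewrite cntEq muln1.
Qed.

Lemma zmod_subm k (C Y : int) : zmod k (C - zmod k Y) = zmod k (C - Y).
Proof.
apply/eqP; rewrite zmod_eq.
have -> : (C - zmod k Y) - (C - Y) = Y - zmod k Y by ring.
by rewrite -zmod_eq /zmod modz_mod.
Qed.

Lemma dvd_shift (M X Y D : int) : (M %| D)%Z -> X = Y + D -> (M %| X)%Z = (M %| Y)%Z.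
Proof. by move=> hD ->; rewrite rpredDr. Qed.

Lemma normE (P c a b : int) i (e f eL eR : bool) (xL yL xR yR : int) :
 ((eL, zmod i.+1 (P * xL - 2 * yL)) ==
  (eR, zmod i.+1 ((if eR then c else 0) - zmod i.+1 (P * xR - 2 * yR)))) &&
 ((f, xL, xR) == (e, a, b)) =
 [&& f == e, eL == eR, xL == a, xR == b &
   ((2 ^ i.+1)%:Z %| ((P * xL - 2 * yL - (if eL then c else 0) + P * xR) - 2 * yR)%R)%Z].
Proof.
rewrite !xpair_eqE zmod_subm zmod_eq.
case: (eL =P eR) => [->|_]; last by rewrite /= !andbF.
have -> : (P * xL - 2 * yL) - ((if eR then c else 0) - (P * xR - 2 * yR)) =
          (P * xL - 2 * yL - (if eR then c else 0) + P * xR) - 2 * yR by ring.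
by case: (f == e); case: (xL == a); case: (xR == b); case: (_ %| _)%Z.
Qed.

Lemma normO (P c s t : int) j (e f eL eR : bool) (xL yL xR yR : int) :
 ~~ (2 %| P)%Z -> 0 <= s < (2 ^ j.+1)%:Z -> 0 <= t < (2 ^ j)%:Z ->
 ((eL, zmod j (xL - yL)) == (eR, zmod j ((if eR then c else 0) - zmod j (xR - yR)))) &&
 ((f, zdiv j.+1 (2 * (xL + xR) - (if eL then c else 0)) (P * P), zdiv j (xR + yR) P) == (e, s, t))
 = [&& f == e, eL == eR,
       ((2 ^ j)%:Z %| (yL - (P * P * s - xL - P * t))%R)%Z,
       ((2 ^ j.+1)%:Z %| ((P * P * s + (if eL then c else 0) - 2 * xL) - 2 * xR)%R)%Z &
       ((2 ^ j)%:Z %| (yR - (P * t - xR))%R)%Z].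
Proof.
move=> hP hs ht.
have hP2 : ~~ (2 %| P * P)%Z by apply: odd_mul.
rewrite !xpair_eqE zmod_subm zmod_eq (zdiv_eq _ _ _ _ hP2 hs) (zdiv_eq _ _ _ _ hP ht).
case: (eL =P eR) => [<-|_]; last by rewrite /= !andbF.
set cL := (if eL then c else 0).
have eS : (P * P * s - (2 * (xL + xR) - cL)) = ((P * P * s + cL - 2 * xL) - 2 * xR) by ring.
have eT : ((2 ^ j)%:Z %| (P * t - (xR + yR))%R)%Z = ((2 ^ j)%:Z %| (yR - (P * t - xR))%R)%Z.
  have -> : P * t - (xR + yR) = - (yR - (P * t - xR)) by ring.
  by rewrite rpredN.
rewrite eS eT.
case hS : ((2 ^ j.+1)%:Z %| _)%Z; last by rewrite /= !andbF.
case hT : ((2 ^ j)%:Z %| (yR - (P * t - xR))%R)%Z; last by rewrite /= !andbF.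
have hS' : ((2 ^ j)%:Z %| ((P * P * s + cL - 2 * xL) - 2 * xR)%R)%Z.
  apply: dvdz_trans hS; rewrite pow2S; apply: dvdz_mull; exact: dvdzz.
have -> : ((2 ^ j)%:Z %| ((xL - yL) - (cL - (xR - yR)))%R)%Z =
          ((2 ^ j)%:Z %| (yL - (P * P * s - xL - P * t))%R)%Z.
  rewrite -[in RHS]rpredN.
  apply: (dvd_shift _ _ _ (- ((P * P * s + cL - 2 * xL - 2 * xR) + (yR - (P * t - xR))))).
    by rewrite rpredN rpredD.
  ring.
by case: (f == e); case: ((2 ^ j)%:Z %| (yL - (P * P * s - xL - P * t))%R)%Z.
Qed.


Arguments psi : simpl never.
Arguments inJ : simpl never.
Arguments Delta : simpl never.

Lemma sum3 (A B C : finType) (F : A * B * C -> nat) :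
  (\sum_(g : A * B * C) F g = \sum_(a : A) \sum_(b : B) \sum_(c : C) F (a, b, c))%N.
Proof.
transitivity (\sum_(ab : A * B) \sum_(c : C) F (ab, c))%N.
  by rewrite pair_bigA; apply: eq_bigr => -[].
rewrite (pair_bigA _ (fun a b => \sum_c F (a, b, c))%N).
by apply: eq_bigr => -[].
Qed.

Lemma sumA (k : nat) (F : AutT k.+1 -> nat) :
  (\sum_(g : AutT k.+1) F g = \sum_(f : bool) \sum_(a : AutT k) \sum_(b : AutT k) F (f, a, b))%N.
Proof. exact: (sum3 bool (AutT k) (AutT k) F). Qed.

Definition bX k := (2 ^ (k./2).+1)%N.
Definition bY k := (if odd k then 2 ^ (k./2).+1 else 2 ^ k./2)%N.
Definition cnt p q k (v : bool * int * int) :=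
  (\sum_(g : AutT k.+2) (inJ p q k.+2 g && (info p q k g == v)))%N.
Definition Inv p q k C := forall e (x : 'I_(bX k)) (y : 'I_(bY k)),
  cnt p q k (e, x%:Z, y%:Z) = C.
Definition Qb p q k (f : bool) (v vL vR : bool * int * int) : bool :=
  (DeltaI p q k vL == Phi p q (k.+2)./2 (DeltaI p q k vR)) && (infoN p q k f vL vR == v).

Lemma rng_abs k (a c y : int) :
  0 <= a < (2 ^ (k.+1)./2)%:Z -> 0 <= c < (2 ^ (k.+2)./2)%:Z -> 0 <= y < (2 ^ (k.+1)./2)%:Z ->
  0 <= (if odd k then a else c) < (bX k)%:Z /\ 0 <= y < (bY k)%:Z.
Proof.
rewrite /bX /bY.
have e1 : (k.+1)./2 = (odd k + k./2)%N by rewrite -uphalf_half.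
have e2 : (k.+2)./2 = (k./2).+1 by [].
rewrite e1 e2.
by case: (odd k) => /=; rewrite ?add1n ?add0n => ha hc hy; split.
Qed.

Lemma info_range p q k (g : AutT k.+2) : odd (p + q) ->
  0 <= (info p q k g).1.2 < (bX k)%:Z /\ 0 <= (info p q k g).2 < (bY k)%:Z.
Proof.
move=> h.
exact: (rng_abs k _ _ _ (psi_range p q k.+1 g.1.2 h) (psi_range p q k.+2 g h)
          (psi_range p q k.+1 g.2 h)).
Qed.

Lemma pt_abs p q (K : nat) (jL jR : bool) (DL DR DIL DIR : bool * int)
   (I IN v : bool * int * int) :
  DL = DIL -> DR = DIR -> I = IN ->
  (([&& jL, jR & DL == Phi p q K DR] && (I == v)) : nat) =
  (jL * (jR * ((DIL == Phi p q K DIR) && (IN == v))))%N.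
Proof. move=> -> -> ->; by case: jL; case: jR; rewrite /= ?mul1n ?mul0n. Qed.

Lemma summand_eq p q k f (L R : AutT k.+2) v : odd (p + q) ->
  ((inJ p q k.+3 (f, L, R) && (info p q k.+1 (f, L, R) == v)) : nat) =
  (inJ p q k.+2 L * (inJ p q k.+2 R * Qb p q k f v (info p q k L) (info p q k R)))%N.
Proof.
move=> h.
exact: (pt_abs p q (k.+2)./2 (inJ p q k.+2 L) (inJ p q k.+2 R) (Delta p q k.+2 L) (Delta p q k.+2 R)
   _ _ (info p q k.+1 (f, L, R)) _ v (Delta_info p q k L h) (Delta_info p q k R h) (info_S p q k f L R)).
Qed.

Lemma bsumZ X Y C (F : bool * int * int -> nat) :
  bsum X Y (fun w => C * F w)%N = (C * bsum X Y F)%N.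
Proof.
rewrite /bsum bigop.big_distrr; apply: eq_bigr => e _.
rewrite bigop.big_distrr; apply: eq_bigr => x _.
by rewrite bigop.big_distrr.
Qed.

Lemma comb p q k : odd (p + q) -> forall e (x : 'I_(bX k.+1)) (y : 'I_(bY k.+1)),
  (\sum_(f : bool) bsum (bX k) (bY k) (fun vL => bsum (bX k) (bY k)
       (fun vR => Qb p q k f (e, x%:Z, y%:Z) vL vR)))%N = bY k.
Proof.
move=> hpq e [x hx] [y hy] /=.
rewrite /bsum.
set i := k./2.
have hu : (k.+1)./2 = (odd k + i)%N by rewrite -uphalf_half.
have hu' : uphalf k = (odd k + i)%N by rewrite uphalf_half.
have h3 : (k.+3)./2 = ((k.+1)./2).+1 by [].
have h2 : (k.+2)./2 = i.+1 by [].
have hP := PQ_odd p q hpq.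
have hc := cPQ_odd p q hpq.
have [o|o] := boolP (odd k).
- have hbX : bX k = (2 ^ i.+1)%N by [].
  have hbY : bY k = (2 ^ i.+1)%N by rewrite /bY o.
  have hx' : 0 <= x%:Z < (2 ^ i.+2)%:Z.
    by move: hx; rewrite /bX hu o add1n -ltz_nat; lia.
  have hy' : 0 <= y%:Z < (2 ^ i.+1)%:Z.
    by move: hy; rewrite /bY oddS o /= ?hu ?hu' o add1n -ltz_nat; lia.
  rewrite hbX hbY.
  have C := combO (PQ p q) (cPQ p q) x y i.+1 e hc.
  rewrite /= in C; apply: (etrans _ C).
  apply: eq_bigr => f _; apply: eq_bigr => eL _; apply: eq_bigr => xL _.
  apply: eq_bigr => yL _; apply: eq_bigr => eR _; apply: eq_bigr => xR _.
  apply: eq_bigr => yR _.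
  congr nat_of_bool.
  rewrite /Qb /DeltaI /infoN /Phi /cc o h3 hu o add1n h2 /=.
  exact: normO.
- have hbX : bX k = (2 ^ i.+1)%N by [].
  have hbY : bY k = (2 ^ i)%N by rewrite /bY (negbTE o).
  have hx' : 0 <= x%:Z < (2 ^ i.+1)%:Z.
    by move: hx; rewrite /bX hu (negbTE o) add0n -ltz_nat; lia.
  have hy' : 0 <= y%:Z < (2 ^ i.+1)%:Z.
    by move: hy; rewrite /bY oddS o /= ?hu ?hu' (negbTE o) add0n -ltz_nat; lia.
  rewrite hbX hbY.
  have C := combE (PQ p q) (cPQ p q) x y i e hc hx' hy'.
  rewrite /= in C; apply: (etrans _ C).
  apply: eq_bigr => f _; apply: eq_bigr => eL _; apply: eq_bigr => xL _.
  apply: eq_bigr => yL _; apply: eq_bigr => eR _; apply: eq_bigr => xR _.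
  apply: eq_bigr => yR _.
  congr nat_of_bool.
  rewrite /Qb /DeltaI /infoN /Phi /cc (negbTE o) h2 /=.
  exact: normE.
Qed.

Lemma step p q k C : odd (p + q) -> Inv p q k C -> Inv p q k.+1 (C * C * bY k)%N.
Proof.
move=> hpq IH e x y.
rewrite /cnt sumA.
transitivity (\sum_(f : bool) \sum_(L : AutT k.+2) (inJ p q k.+2 L *
   \sum_(R : AutT k.+2) (inJ p q k.+2 R * Qb p q k f (e, x%:Z, y%:Z) (info p q k L) (info p q k R))))%N.
  apply: eq_bigr => f _; apply: eq_bigr => L _.
  rewrite bigop.big_distrr; apply: eq_bigr => R _.
  exact: summand_eq.
transitivity (\sum_(f : bool) (C * bsum (bX k) (bY k) (fun vL => C * bsum (bX k) (bY k)
       (fun vR => Qb p q k f (e, x%:Z, y%:Z) vL vR))))%N.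
  apply: eq_bigr => f _.
  rewrite -(push _ (inJ p q k.+2) (info p q k) (bX k) (bY k) C (fun vL => C * bsum (bX k) (bY k)
       (fun vR => Qb p q k f (e, x%:Z, y%:Z) vL vR)))%N; last first.
  - exact: IH.
  - by move=> t; apply: info_range.
  apply: eq_bigr => L _; congr (_ * _)%N.
  rewrite (push _ (inJ p q k.+2) (info p q k) (bX k) (bY k) C (fun vR => Qb p q k f (e, x%:Z, y%:Z) (info p q k L) vR)) //.
  by move=> t; apply: info_range.
under eq_bigr => f _ do rewrite bsumZ mulnA.
by rewrite -bigop.big_distrr /= comb // mulnA.
Qed.


Lemma sum0 (F : AutT 0 -> nat) : (\sum_(u : AutT 0) F u = F tt)%N.
Proof. by apply: (sum_only _ tt) => -[]. Qed.

Lemma sum1 (F : AutT 1 -> nat) : (\sum_(u : AutT 1) F u = F (true, tt, tt) + F (false, tt, tt))%N.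
Proof. by rewrite sumA big_bool !sum0. Qed.

Lemma sum2 (F : AutT 2 -> nat) : (\sum_(u : AutT 2) F u =
   \sum_(f : bool) \sum_(a : bool) \sum_(b : bool) F (f, (a, tt, tt), (b, tt, tt)))%N.
Proof.
rewrite sumA; apply: eq_bigr => f _.
rewrite sum1 !big_bool /= !sum1.
by rewrite !addnA.
Qed.

Lemma cnt0 p q e (b : bool) : cnt p q 0 (e, (b : nat)%:Z, 0) = 1%N.
Proof.
rewrite /cnt sum2 !big_bool.
by case: e; case: b; vm_compute.
Qed.

Lemma Inv0 p q : Inv p q 0 1.
Proof.
move=> e [x hx] [y hy] /=.
have hy' : (y < 1)%N by move: hy; rewrite /bY /= expn0.
have hx' : (x < 2)%N by move: hx; rewrite /bX /= expn1.
have -> : y = 0%N by lia.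
have [-> | ->] : x = (false : nat) \/ x = (true : nat) by rewrite /=; lia.
  exact: cnt0.
exact: cnt0.
Qed.

Lemma cardJ p q n : #|J p q n| = (\sum_(g : AutT n) inJ p q n g)%N.
Proof.
rewrite /J cardsE -sum1_card big_mkcond /=.
apply: eq_bigr => g _; change (g \in inJ p q n) with (inJ p q n g); by case: (inJ p q n g).
Qed.

Lemma cardJ_Inv p q k C : odd (p + q) -> Inv p q k C ->
  #|J p q k.+2| = (C * (2 * bX k * bY k))%N.
Proof.
move=> hpq IH; rewrite cardJ.
transitivity (\sum_(g : AutT k.+2) (inJ p q k.+2 g * (fun _ => 1%N) (info p q k g)))%N.
  by apply: eq_bigr => g _; rewrite muln1.
rewrite (push _ (inJ p q k.+2) (info p q k) (bX k) (bY k) C (fun _ => 1%N)) //.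
  congr (_ * _)%N.
  rewrite /bsum big_bool /=.
  rewrite !sum_nat_const !card_ord.
  lia.
by move=> t; apply: info_range.
Qed.

Lemma arith k C :
  (C * C * bY k * (2 * bX k.+1 * bY k.+1) * (2 * 2 ^ (k.+2)./2) =
   2 * (C * (2 * bX k * bY k)) ^ 2)%N.
Proof.
rewrite /bX /bY.
have e1 : (k.+1)./2 = (odd k + k./2)%N by rewrite -uphalf_half.
have e2 : (k.+2)./2 = (k./2).+1 by [].
rewrite e1 e2 oddS.
set t := (2 ^ k./2)%N.
case: (odd k) => /=; rewrite ?add1n ?add0n !expnS -/t; ring.
Qed.

Lemma InvAll p q : odd (p + q) -> forall k, exists C, Inv p q k C.
Proof.
move=> hpq; elim=> [|k [C IH]]; first by exists 1%N; exact: Inv0.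
by exists (C * C * bY k)%N; apply: step.
Qed.

Local Close Scope ring_scope.

Theorem lemma4 (p q : nat) :
  (0 < p)%N -> (0 < q)%N -> odd (p + q) ->
  forall n : nat, (2 <= n)%N ->
    (#|J p q n| * dihedral_order ((n.-1)./2) = 2 * #|J p q n.-1| ^ 2)%N.
Proof.
move=> _ _ hpq0 n hn.
have hpq : odd (p + q)%R := hpq0.
have dO : forall m, dihedral_order m = (2 * 2 ^ m)%N.
  by move=> m; rewrite /dihedral_order card_prod card_bool card_ord.
case: n hn => [|[|n]] // _.
case: n => [|k].
  rewrite (cardJ_Inv p q 0 1 hpq (Inv0 p q)) dO.
  have -> : #|J p q 1| = 2%N.
    rewrite cardJ sum1.
    by change (inJ p q 1 (true, tt, tt)) with true; change (inJ p q 1 (false, tt, tt)) with true.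
  by rewrite /bX /bY /=.
have [C IH] := InvAll p q hpq k.
rewrite (cardJ_Inv p q k.+1 _ hpq (step p q k C hpq IH)) (cardJ_Inv p q k C hpq IH) dO.
rewrite -arith.
by rewrite mulnA.
Qed.
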